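(* Let $R$ be a finite set with $|R|=k$ and two binary operations $\oplus,\odot$, with structure matrices $M_\oplus,M_\odot\in\mathcal L_{k\times k^2}$, so that $\vec{x\oplus y}=M_\oplus\ltimes x\ltimes y$ and $\vec{x\odot y}=M_\odot\ltimes x\ltimes y$ for the vector forms $x,y\in\Delta_k$. Then: (i) $\oplus$ is commutative iff $M_\oplus=M_\oplus W_{[k,k]}$; (ii) $\oplus$ is associative iff $M_\oplus\ltimes M_\oplus=M_\oplus(I_k\otimes M_\oplus)$; (iii) $\delta_k^k$ is the identity for $\oplus$ iff $M_\oplus\ltimes\delta_k^k=M_\oplus W_{[k,k]}\ltimes\delta_k^k=I_k$; (iv) $(R,\oplus)$ has inverses iff there exists a unary operation $\neg$ on $R$, with structure matrix $M_\neg\in\mathcal L_{k\times k}$, such that $M_\oplus(I_k\otimes M_\neg)\mathrm{PR}_k=\delta_k^k\mathbf 1_k^T$; (v) $\odot$ is associative iff $M_\odot\ltimes M_\odot=M_\odot(I_k\otimes M_\odot)$; (vi) $\delta_k^1$ is the identity for $\odot$ iff $M_\odot\ltimes\delta_k^1=M_\odot W_{[k,k]}\ltimes\delta_k^1=I_k$; (vii) both distributive laws hold iff (a) $M_\odot\ltimes M_\oplus=M_\oplus\ltimes M_\odot\ltimes(I_{k^2}\otimes M_\odot)\ltimes(I_k\otimes W_{[k,k]})\ltimes(I_{k^2}\otimes\mathrm{PR}_k)$ and (b) $M_\odot(I_k\otimes M_\oplus)=M_\oplus\ltimes M_\odot\ltimes(I_{k^2}\otimes M_\odot)\ltimes(I_k\otimes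 W_{[k,k]})\ltimes\mathrm{PR}_k$.
   Context: Semi-tensor product: for $A\in\mathcal M_{m\times n}$, $B\in\mathcal M_{p\times q}$ and $t=\mathrm{lcm}(n,p)$, $A\ltimes B:=(A\otimes I_{t/n})(B\otimes I_{t/p})$; all matrix products above are semi-tensor products. $\delta_k^i$ is the $i$-th column of $I_k$, $\Delta_k=\{\delta_k^1,\dots,\delta_k^k\}$, and $\mathcal L_{m\times n}$ is the set of $m\times n$ matrices all of whose columns lie in $\Delta_m$. Elements of $R$ are labeled $1,2,\dots,k-1,0$ and represented in vector form by $i\mapsto\delta_k^i$ ($1\le i\le k-1$), $0\mapsto\delta_k^k$; by convention $\delta_k^1$ represents the candidate multiplicative identity $\mathbf 1$ and $\delta_k^k$ the candidate additive identity $\mathbf 0$. The swap matrix is $W_{[m,n]}=[I_n\otimes\delta_m^1,\dots,I_n\otimes\delta_m^m]$ (so $W_{[m,n]}xy=yx$ for $x\in\mathbb R^m,y\in\mathbb R^n$); the power-reducing matrix is $\mathrm{PR}_k=\mathrm{diag}(\delta_k^1,\dots,\delta_k^k)\in\mathcal L_{k^2\times k}$ (so $\mathrm{PR}_kx=x\ltimes x$ for $x\in\Delta_k$); $\mathbf 1_k$ is the all-ones column vector of length $k$. *)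

(* Defs.v *)
From HB Require Import structures.
From mathcomp Require Import all_boot all_order all_algebra.
From mathcomp Require Import mxtens.
Set Implicit Arguments. Unset Strict Implicit. Unset Printing Implicit Defensive.
Import GRing.Theory.
Local Open Scope ring_scope.

Section STP.
Variable K : nzRingType.

Lemma stp_dim_proof (n p : nat) :
  (n * (lcmn n p %/ n) = p * (lcmn n p %/ p))%N.
Proof.
by rewrite (mulnC n) (mulnC p) !divnK ?dvdn_lcml ?dvdn_lcmr.
Qed.

(* Semi-tensor product: for A (m x n), B (p x q), t = lcm(n,p),
   A |x B := (A (x) I_{t/n}) (B (x) I_{t/p}).  The inner dimensions
   n * (t/n) and p * (t/p) are both t; the cast only identifies them. *)
Definition stp (m n p q : nat) (A : 'M[K]_(m, n)) (B : 'M[K]_(p, q))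
  : 'M[K]_((m * (lcmn n p %/ n))%N, (q * (lcmn n p %/ p))%N) :=
  (A *t (1%:M : 'M[K]_(lcmn n p %/ n)%N))
    *m castmx (esym (stp_dim_proof n p), erefl _)
              (B *t (1%:M : 'M[K]_(lcmn n p %/ p)%N)).

(* Matrices of possibly different (non-convertible) dimension expressions,
   packed with their dimensions; equality of packs = same dimensions and
   same entries. *)
Definition pk (m n : nat) (A : 'M[K]_(m, n)) : {d : nat * nat & 'M[K]_(d.1, d.2)} :=
  existT (fun d : nat * nat => 'M[K]_(d.1, d.2)) (m, n) A.

(* delta_k^i : the i-th column of I_k (1-based, 1 <= i <= k) *)
Definition delta (k i : nat) : 'cV[K]_k := \col_(j < k) ((j.+1 == i)%:R).

Definition in_Delta (k : nat) (v : 'cV[K]_k) : Prop :=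
  exists2 i : nat, (0 < i <= k)%N & v = delta k i.

Definition logical_mx (m n : nat) (A : 'M[K]_(m, n)) : Prop :=
  forall j : 'I_n, in_Delta (col j A).

(* swap matrix W_{[m,n]} = [I_n (x) delta_m^1, ..., I_n (x) delta_m^m]
   (mn x mn).  Column a*n+b (block a < m, column b < n of I_n (x) delta_m^{a+1})
   equals delta_n^{b+1} (x) delta_m^{a+1}, whose 1 sits in row b*m+a. *)
Definition swap_mx (m n : nat) : 'M[K]_(m * n, m * n) :=
  \matrix_(r, c) ((r : nat) == (c %% n) * m + c %/ n)%N%:R.

(* power-reducing matrix PR_k = diag(delta_k^1, ..., delta_k^k) (k^2 x k):
   column c (0-based) is the block delta_k^{c+1} placed in rows c*k .. c*k+k-1 *)
Definition pr_mx (k : nat) : 'M[K]_(k * k, k) :=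
  \matrix_(r, c) ((r : nat) == c * k + c)%N%:R.

Definition ones_row (k : nat) : 'M[K]_(1, k) := const_mx 1.

End STP.

Arguments pk {K m n}.
Arguments delta {K}.
Arguments swap_mx {K}.
Arguments pr_mx {K}.
Arguments ones_row {K}.

Notation "A |x B" := (stp A B) (at level 40, left associativity).
Notation "A =pk= B" := (pk A = pk B) (at level 70, no associativity).

(* vector form of an element of a finite set R under a labeling
   lab : R -> 'I_k (0-based index i  <->  delta_k^{i+1}). *)
Definition vform (K : nzRingType) (R : Type) (k : nat) (lab : R -> 'I_k) (x : R)
  : 'cV[K]_k := delta k (lab x).+1.

(* Main.v *)
Require Import Defs.
From HB Require Import structures.
From mathcomp Require Import all_boot all_order all_algebra.
From mathcomp Require Import mxtens.
From Stdlib Require Import Setoid.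
From Stdlib Require Import Eqdep_dec.
Set Implicit Arguments. Unset Strict Implicit. Unset Printing Implicit Defensive.
Import GRing.Theory.
Local Open Scope ring_scope.

Section Fw.
Variable K : nzRingType.

Lemma nlt a b : (b <= a)%N -> ~~ (a < b)%N.
Proof. by rewrite -leqNgt. Qed.

Definition E m n (A : 'M[K]_(m, n)) (i j : nat) : K :=
  if (insub i : option 'I_m) is Some i' then
    if (insub j : option 'I_n) is Some j' then A i' j' else 0 else 0.

Lemma E_ord m n (A : 'M[K]_(m, n)) (i : 'I_m) (j : 'I_n) : E A i j = A i j.
Proof. by rewrite /E !valK. Qed.

Lemma E_oor m n (A : 'M[K]_(m, n)) i j : ~~ ((i < m) && (j < n))%N -> E A i j = 0.
Proof.
rewrite /E negb_and => H.
case: insubP => [i' hi ei|//]; case: insubP => [j' hj ej|//].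
by move: H; rewrite hi hj.
Qed.

Lemma pk_eqE m n m' n' (A : 'M[K]_(m, n)) (B : 'M[K]_(m', n')) :
  pk A = pk B -> [/\ m = m', n = n' & forall i j, E A i j = E B i j].
Proof.
move=> H; have := congr1 (@projT1 _ _) H => /= [[em en]].
subst m' n'; split => // i j.
have -> // : A = B.
apply: (inj_pair2_eq_dec _ _ (fun d : nat * nat => 'M[K]_(d.1, d.2))) H.
by move=> x y; apply: eq_comparable.
Qed.

Lemma pk_eqI m n m' n' (A : 'M[K]_(m, n)) (B : 'M[K]_(m', n')) :
  m = m' -> n = n' -> (forall i j, (i < m)%N -> (j < n)%N -> E A i j = E B i j) ->
  pk A = pk B.
Proof.
move=> em en H; subst m' n'; congr pk; apply/matrixP => i j.
by rewrite -!E_ord H.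
Qed.

Definition isfm m n (A : 'M[K]_(m, n)) (g : nat -> nat) :=
  (forall j, (j < n)%N -> (g j < m)%N) /\
  (forall i j, E A i j = ((i == g j) && (j < n)%N)%:R).

Lemma isfm_mx m n (A : 'M[K]_(m, n)) g :
  (forall j, (j < n)%N -> (g j < m)%N) ->
  (forall (i : 'I_m) (j : 'I_n), A i j = (i == g j :> nat)%:R) -> isfm A g.
Proof.
move=> hg hA; split => // i j.
case: (ltnP i m) => hi; last first.
  rewrite E_oor; last by rewrite ltnNge hi.
  case: (ltnP j n) => hj; last by rewrite andbF.
  by case: eqP => // ei; move: (hg j hj); rewrite -ei ltnNge hi.
case: (ltnP j n) => hj; last first.
  by rewrite E_oor ?andbF // negb_and (nlt hj) orbT.
by rewrite -[i]/(nat_of_ord (Ordinal hi)) -[j]/(nat_of_ord (Ordinal hj)) E_ord hA andbT.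
Qed.

Lemma isfm_ext m n (A : 'M[K]_(m, n)) g g' :
  (forall j, (j < n)%N -> g j = g' j) -> isfm A g -> isfm A g'.
Proof.
move=> e [hg hA]; split => [j hj|i j]; first by rewrite -e ?hg.
rewrite hA; case: (ltnP j n) => hj; last by rewrite !andbF.
by rewrite e.
Qed.

Lemma E_mul m n q (A : 'M[K]_(m, n)) (B : 'M[K]_(n, q)) i j :
  E (A *m B) i j = \sum_(l < n) E A i l * E B l j.
Proof.
case: (ltnP i m) => hi; last first.
  rewrite E_oor ?negb_and ?(nlt hi) //; symmetry; apply: big1 => l _.
  by rewrite (@E_oor _ _ A) ?negb_and ?(nlt hi) ?mul0r.
case: (ltnP j q) => hj; last first.
  rewrite E_oor ?negb_and ?(nlt hj) ?orbT //; symmetry; apply: big1 => l _.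
  by rewrite (@E_oor _ _ B) ?negb_and ?(nlt hj) ?orbT ?mulr0.
rewrite -[i]/(nat_of_ord (Ordinal hi)) -[j]/(nat_of_ord (Ordinal hj)) E_ord mxE.
by apply: eq_bigr => l _; rewrite !E_ord.
Qed.

Lemma isfm_mul m n q (A : 'M[K]_(m, n)) (B : 'M[K]_(n, q)) g h :
  isfm A g -> isfm B h -> isfm (A *m B) (fun j => g (h j)).
Proof.
move=> [hg hA] [hh hB]; split => [j hj|i j]; first by apply/hg/hh.
rewrite E_mul; case: (ltnP j q) => hj; last first.
  by rewrite andbF; apply: big1 => l _; rewrite hB (negbTE (nlt hj)) andbF mulr0.
rewrite andbT (bigD1 (Ordinal (hh j hj))) //= big1 ?addr0.
  by rewrite hA hB eqxx hj /= mulr1 (hh j hj) andbT.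
move=> l /eqP nl; rewrite hB hj andbT.
case: eqP => [el|]; last by rewrite mulr0.
by case: nl; apply: val_inj.
Qed.

Lemma E_tens m n p q (A : 'M[K]_(m, n)) (B : 'M[K]_(p, q)) i j :
  E (A *t B) i j = E A (i %/ p) (j %/ q) * E B (i %% p) (j %% q).
Proof.
case: (ltnP i (m * p)) => hi; last first.
  rewrite E_oor ?negb_and ?(nlt hi) //.
  case: p A B hi => [|p] A B hi.
    by rewrite (@E_oor _ _ B) ?mulr0 // modn0 ltn0.
  by rewrite (@E_oor _ _ A) ?mul0r // negb_and nlt // leq_divRL.
case: (ltnP j (n * q)) => hj; last first.
  rewrite E_oor ?negb_and ?(nlt hj) ?orbT //.
  case: q A B hj => [|q] A B hj.
    by rewrite (@E_oor _ _ B) ?mulr0 // modn0 ltn0 andbF.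
  by rewrite (@E_oor _ _ A) ?mul0r // negb_and (@nlt (j %/ q.+1)) ?orbT // leq_divRL.
rewrite -[i]/(nat_of_ord (Ordinal hi)) -[j]/(nat_of_ord (Ordinal hj)) E_ord mxE.
rewrite -[X in E A X]/(nat_of_ord (mxtens_unindex (Ordinal hi)).1).
rewrite -[X in E A _ X]/(nat_of_ord (mxtens_unindex (Ordinal hj)).1).
rewrite -[X in E B X]/(nat_of_ord (mxtens_unindex (Ordinal hi)).2).
rewrite -[X in E B _ X]/(nat_of_ord (mxtens_unindex (Ordinal hj)).2).
by rewrite !E_ord.
Qed.

Lemma eq_divmod i a b p : (b < p)%N -> (i == a * p + b)%N = (i %/ p == a)%N && (i %% p == b)%N.
Proof.
move=> hb; apply/eqP/andP => [->|[/eqP ea /eqP eb]].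
  have p0 : (0 < p)%N by case: p hb.
  by rewrite divnMDl // modnMDl divn_small // modn_small // addn0.
by rewrite (divn_eq i p) ea eb.
Qed.

Lemma isfm_tens m n p q (A : 'M[K]_(m, n)) (B : 'M[K]_(p, q)) g h :
  isfm A g -> isfm B h ->
  isfm (A *t B) (fun c => g (c %/ q) * p + h (c %% q))%N.
Proof.
move=> [hg hA] [hh hB]; split => [j hj|i j].
  have q0 : (0 < q)%N by case: (posnP q) hj => [->|//]; rewrite muln0.
  have h1 : (j %/ q < n)%N by rewrite ltn_divLR.
  have h2 : (j %% q < q)%N by rewrite ltn_mod.
  exact: (mxtens_index_proof (Ordinal (hg _ h1), Ordinal (hh _ h2))).
rewrite E_tens hA hB.
case: (posnP q) => [q0|q0].
  by rewrite q0 modn0 ltn0 muln0 ltn0 !andbF mulr0.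
have -> : (j < n * q)%N = (j %/ q < n)%N && (j %% q < q)%N by rewrite ltn_mod q0 andbT ltn_divLR.
case: (ltnP (j %% q) q) => h2; last by rewrite !andbF mulr0.
case: (ltnP (j %/ q) n) => h1; last by rewrite !andbF mul0r.
by rewrite !andbT -natrM mulnb eq_divmod // hh.
Qed.

Lemma isfm_cast m n m' n' (e : (m = m') * (n = n')) (A : 'M[K]_(m, n)) g :
  isfm A g -> isfm (castmx e A) g.
Proof. by case: e => em en; subst m' n'; rewrite castmx_id. Qed.

Lemma isfm_one n : isfm (1%:M : 'M[K]_n) (fun j => j).
Proof. apply: (@isfm_mx n n) => // i j; by rewrite mxE. Qed.

Lemma isfm_stp m n p q (A : 'M[K]_(m, n)) (B : 'M[K]_(p, q)) g h :
  isfm A g -> isfm B h ->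
  isfm (A |x B) (fun c => let s := (lcmn n p %/ n)%N in let t := (lcmn n p %/ p)%N in
     g ((h (c %/ t) * t + c %% t) %/ s) * s + (h (c %/ t) * t + c %% t) %% s)%N.
Proof.
move=> hA hB; rewrite /stp.
apply: (isfm_mul (isfm_tens hA (isfm_one _))).
by apply: isfm_cast; apply: (isfm_tens hB (isfm_one _)).
Qed.

Definition FM r N (g : nat -> nat) (s : {d : nat * nat & 'M[K]_(d.1, d.2)}) : Prop :=
  projT1 s = (r, N) /\ isfm (projT2 s) g.

Lemma FM_stp_eq m n p q (A : 'M[K]_(m, n)) (B : 'M[K]_(p, q)) r N N' g h :
  FM r N g (pk A) -> FM N N' h (pk B) -> (0 < N)%N ->
  FM r N' (fun c => g (h c)) (pk (A |x B)).
Proof.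
move=> [[em en] hA] [[ep eq] hB] N0 /=; subst r N N' p.
have L : lcmn n n = n by apply/lcmn_idPl.
rewrite /FM /pk /=; split; first by rewrite L divnn N0 !muln1.
apply: isfm_ext (isfm_stp hA hB) => c _ /=.
by rewrite L divnn N0 !divn1 !modn1 !muln1 !addn0.
Qed.

Lemma FM_stp_div m n p q (A : 'M[K]_(m, n)) (B : 'M[K]_(p, q)) r N P Q t g h :
  FM r N g (pk A) -> FM P Q h (pk B) -> N = (P * t)%N -> (0 < P)%N -> (0 < t)%N ->
  FM r (Q * t) (fun c => g (h (c %/ t) * t + c %% t))%N (pk (A |x B)).
Proof.
move=> [[em en] hA] [[ep eq] hB] eN P0 t0 /=; subst r N P Q n.
have L : lcmn (p * t) p = (p * t)%N by apply/lcmn_idPl; apply: dvdn_mulr.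
have Pt0 : (0 < p * t)%N by rewrite muln_gt0 P0.
rewrite /FM /pk /=; split; first by rewrite L divnn Pt0 mulKn // muln1.
apply: isfm_ext (isfm_stp hA hB) => c _ /=.
by rewrite L divnn Pt0 mulKn // !divn1 !modn1 !muln1 !addn0.
Qed.

Lemma FM_tens m n p q (A : 'M[K]_(m, n)) (B : 'M[K]_(p, q)) r N P Q g h :
  FM r N g (pk A) -> FM P Q h (pk B) ->
  FM (r * P) (N * Q) (fun c => g (c %/ Q) * P + h (c %% Q))%N (pk (A *t B)).
Proof.
move=> [[em en] hA] [[ep eq] hB] /=; subst r N P Q.
by split => //; apply: isfm_tens.
Qed.

Lemma FM_dim r N r' N' g s : r = r' -> N = N' -> FM r N g s -> FM r' N' g s.
Proof. by move=> -> ->. Qed.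

Lemma FM_ext r N g g' s : (forall c, (c < N)%N -> g c = g' c) -> FM r N g s -> FM r N g' s.
Proof.
case: s => [[a b] M] /= e [[ea eb] hM]; subst a b; split => //.
exact: isfm_ext hM.
Qed.

Lemma FM_eq m n m' n' (A : 'M[K]_(m, n)) (B : 'M[K]_(m', n')) r N g g' :
  FM r N g (pk A) -> FM r N g' (pk B) ->
  (pk A = pk B <-> forall c, (c < N)%N -> g c = g' c).
Proof.
move=> [[em en] [hg hA]] [[em' en'] [hg' hB]] /=; subst m n m' n'; split.
  move=> /pk_eqE [_ _ H] c hc; have := H (g c) c.
  rewrite hA hB eqxx hc /= andbT; case: eqP => // _ /eqP.
  by rewrite oner_eq0.
move=> H; apply: pk_eqI => // i j _ hj.
by rewrite hA hB H.
Qed.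

Lemma FM_one n : FM n n (fun j => j) (pk (1%:M : 'M[K]_n)).
Proof. by split => //; apply: isfm_one. Qed.

Lemma FM_delta k a : (0 < a <= k)%N -> FM k 1 (fun _ => a.-1) (pk (delta (K := K) k a)).
Proof.
case/andP => a0 ak; split => //; apply: isfm_mx => [j _|i j].
  by rewrite prednK.
by rewrite mxE -{1}(prednK a0) eqSS.
Qed.

Lemma FM_swap m n : FM (m * n) (m * n) (fun c => c %% n * m + c %/ n)%N (pk (swap_mx (K := K) m n)).
Proof.
rewrite /FM /pk /=; split => //; apply: isfm_mx => [j hj|i j]; last by rewrite mxE.
have n0 : (0 < n)%N by case: (posnP n) hj => [->|//]; rewrite muln0.
have h1 : (j %/ n < m)%N by rewrite ltn_divLR.
have h2 : (j %% n < n)%N by rewrite ltn_mod.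
have := (@mxtens_index_proof n m (Ordinal h2, Ordinal h1)); by rewrite /= [(n * m)%N]mulnC.
Qed.

Lemma FM_pr k : FM (k * k) k (fun c => c * k + c)%N (pk (pr_mx (K := K) k)).
Proof.
rewrite /FM /pk /=; split => //; apply: isfm_mx => [j hj|i j]; last by rewrite mxE.
exact: (mxtens_index_proof (Ordinal hj, Ordinal hj)).
Qed.

Lemma FM_ones k : FM 1 k (fun _ => 0%N) (pk (ones_row (K := K) k)).
Proof.
rewrite /FM /pk /=; split => //; apply: isfm_mx => [//|i j]; by rewrite mxE; case: i => [[]].
Qed.

Lemma FM_logical m n (A : 'M[K]_(m, n)) : logical_mx A -> exists g, FM m n g (pk A).
Proof.
move=> hL; have [f hf hf'] := fin_all_exists2 hL.
exists (fun c => if (insub c : option 'I_n) is Some j then (f j).-1 else 0%N).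
rewrite /FM /pk /=; split => //; apply: isfm_mx => [j hj|i j].
  by rewrite insubT /=; case/andP: (hf (Ordinal hj)) => f0 fm; rewrite prednK.
rewrite valK; have := congr1 (fun M : 'cV[K]_m => M i 0) (hf' j); rewrite !mxE => ->.
by case/andP: (hf j) => f0 _; rewrite -{1}(prednK f0) eqSS.
Qed.
End Fw.

Section Main.
Variables (K : nzRingType) (R : finType) (k : nat) (k_gt0 : (0 < k)%N)
  (lab : R -> 'I_k) (linv : 'I_k -> R) (labK : cancel lab linv) (linvK : cancel linv lab).

Definition xo (u : nat) : R := linv (insubd (Ordinal k_gt0) u).

Lemma xolab x : xo (lab x) = x.
Proof. by rewrite /xo valKd labK. Qed.

Lemma labxo u : (u < k)%N -> (lab (xo u) : nat) = u.
Proof. by move=> hu; rewrite /xo linvK val_insubd hu. Qed.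

Lemma lab_inj x y : (lab x : nat) = lab y -> x = y.
Proof. by move=> /val_inj /(can_inj labK). Qed.

Lemma labdiv x : ((lab x : nat) %/ k = 0)%N.
Proof. by rewrite divn_small. Qed.

Lemma labmod x : ((lab x : nat) %% k = lab x)%N.
Proof. by rewrite modn_small. Qed.

Lemma modn_kk c : (c %% (k * k) = (c %/ k %% k) * k + c %% k)%N.
Proof.
rewrite {1}(divn_eq c k) {1}(divn_eq (c %/ k) k) mulnDl -mulnA -addnA modnMDl modn_small //.
have h1 : (c %/ k %% k < k)%N by rewrite ltn_mod.
have h2 : (c %% k < k)%N by rewrite ltn_mod.
exact: (@mxtens_index_proof k k (Ordinal h1, Ordinal h2)).
Qed.

Lemma all1E (g g' : nat -> nat) :
  (forall c, (c < k)%N -> g c = g' c) <-> (forall x, g (lab x) = g' (lab x)).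
Proof.
split => [H x|H c hc]; first exact: H.
by have := H (xo c); rewrite labxo.
Qed.

Lemma all2E (g g' : nat -> nat) :
  (forall c, (c < k * k)%N -> g c = g' c) <->
  (forall x y, g (lab x * k + lab y)%N = g' (lab x * k + lab y)%N).
Proof.
split => [H x y|H c hc].
  by apply: H; exact: (@mxtens_index_proof k k (lab x, lab y)).
have h1 : (c %/ k < k)%N by rewrite ltn_divLR.
have h2 : (c %% k < k)%N by rewrite ltn_mod.
by have := H (xo (c %/ k)) (xo (c %% k)); rewrite !labxo // -divn_eq.
Qed.

Lemma all3E (g g' : nat -> nat) :
  (forall c, (c < k * k * k)%N -> g c = g' c) <->
  (forall x y z, g ((lab x * k + lab y) * k + lab z)%N = g' ((lab x * k + lab y) * k + lab z)%N).
Proof.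
split => [H x y z|H c hc].
  apply: H.
  have h := (@mxtens_index_proof k k (lab x, lab y)).
  exact: (@mxtens_index_proof (k * k) k (Ordinal h, lab z)).
have h1 : (c %/ k < k * k)%N by rewrite ltn_divLR.
have h2 : (c %% k < k)%N by rewrite ltn_mod.
have h3 : (c %/ k %/ k < k)%N by rewrite ltn_divLR.
have h4 : (c %/ k %% k < k)%N by rewrite ltn_mod.
have := H (xo (c %/ k %/ k)) (xo (c %/ k %% k)) (xo (c %% k)).
by rewrite !labxo // -!divn_eq.
Qed.

Lemma kk_gt0 : (0 < k * k)%N. Proof. by rewrite muln_gt0 k_gt0. Qed.
Lemma kkk_gt0 : (0 < k * k * k)%N. Proof. by rewrite !muln_gt0 k_gt0. Qed.

Lemma FM_v x : FM k 1 (fun _ => nat_of_ord (lab x)) (pk (vform K lab x)).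
Proof. by apply: FM_delta; rewrite /= ltn_ord. Qed.

Section Op.
Variables (op : R -> R -> R) (M : 'M[K]_(k, k * k)) (HL : logical_mx M)
  (H : forall x y : R, vform K lab (op x y) =pk= M |x vform K lab x |x vform K lab y).

Definition fo (c : nat) : nat := lab (op (xo (c %/ k)) (xo (c %% k))).

Lemma foE x y : fo (lab x * k + lab y)%N = lab (op x y).
Proof. by rewrite /fo divnMDl // modnMDl labdiv labmod addn0 !xolab. Qed.

Lemma FM_M : FM k (k * k) fo (pk M).
Proof.
have [g0 hg] := FM_logical HL.
apply: FM_ext (hg); apply/all2E => x y.
have h1 := FM_stp_div hg (FM_v x) (t := k) erefl k_gt0 k_gt0.
have h2 := FM_stp_eq (FM_dim erefl (mul1n k) h1) (FM_v y) k_gt0.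
have := (FM_eq (FM_v (op x y)) h2).1 (H x y) 0 erefl.
by rewrite labmod foE => ->.
Qed.

Ltac simp := cbv beta; do 8 rewrite ?mulnA ?divnMA ?modn_kk ?(divnMDl _ _ k_gt0) ?modnMDl ?labdiv ?labmod ?addn0 ?foE ?xolab.

Lemma comm_iff : (forall x y, op x y = op y x) <-> M =pk= M |x swap_mx k k.
Proof.
have h := FM_stp_eq FM_M (FM_swap K k k) kk_gt0.
rewrite (FM_eq FM_M h) all2E; split => Hc x y.
  by simp; rewrite Hc.
by have := Hc x y; simp; apply: lab_inj.
Qed.

Lemma assoc_iff : (forall x y z, op (op x y) z = op x (op y z)) <->
  M |x M =pk= M |x ((1%:M : 'M[K]_k) *t M).
Proof.
have h1 := FM_stp_div FM_M FM_M (t := k) erefl k_gt0 k_gt0.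
have h2 := FM_stp_eq FM_M (FM_tens (FM_one K k) FM_M) kk_gt0.
have h2' := FM_dim erefl (mulnA k k k) h2.
rewrite (FM_eq h1 h2') all3E; split => Hc x y z.
  by simp; rewrite Hc.
by have := Hc x y z; simp; apply: lab_inj.
Qed.

Lemma ident_iff a : (0 < a <= k)%N ->
  ((exists e : R, vform K lab e = delta k a /\ forall x : R, op e x = x /\ op x e = x) <->
   (M |x delta k a =pk= (1%:M : 'M[K]_k) /\
    M |x swap_mx k k |x delta k a =pk= (1%:M : 'M[K]_k))).
Proof.
move=> ha; have a1 : (a.-1 < k)%N by case/andP: ha => a0 ak; rewrite prednK.
set e0 := xo a.-1.
have he0 : a.-1 = lab e0 by rewrite labxo.
have h1 := FM_dim erefl (mul1n k) (FM_stp_div FM_M (FM_delta K ha) (t := k) erefl k_gt0 k_gt0).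
have h2 := FM_dim erefl (mul1n k) (FM_stp_div (FM_stp_eq FM_M (FM_swap K k k) kk_gt0)
   (FM_delta K ha) (t := k) erefl k_gt0 k_gt0).
rewrite (FM_eq h1 (FM_one K k)) (FM_eq h2 (FM_one K k)) !all1E he0.
split.
  case=> e [he Hid].
  have ee : e = e0.
    have := (FM_eq (FM_v e) (FM_delta K ha)).1 (congr1 (@pk K k 1) he) 0 erefl.
    by rewrite he0 => /lab_inj.
  subst e; split => x; simp; [by case: (Hid x) => -> _ | by case: (Hid x) => _ ->].
case=> H1 H2; exists e0; split.
  by rewrite /vform -he0 prednK //; case/andP: ha.
move=> x; split; apply: lab_inj; [have := H1 x | have := H2 x]; by simp.
Qed.

Lemma inv_iff :
  ((forall z : R, vform K lab z = delta k k -> forall x : R, exists y : R, op x y = z) <->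
     (exists (neg : R -> R) (Mneg : 'M[K]_k),
        logical_mx Mneg /\
        (forall x : R, vform K lab (neg x) =pk= Mneg |x vform K lab x) /\
        M |x ((1%:M : 'M[K]_k) *t Mneg) |x pr_mx k
          =pk= delta k k |x ones_row k)).
Proof.
have hk : (0 < k <= k)%N by rewrite k_gt0 leqnn.
have k1 : (k.-1 < k)%N by rewrite prednK.
set e0 := xo k.-1.
have he0 : k.-1 = lab e0 by rewrite labxo.
have ve0 : forall z, vform K lab z = delta k k -> z = e0.
  move=> z hz; have := (FM_eq (FM_v z) (FM_delta K hk)).1 (congr1 (@pk K k 1) hz) 0 erefl.
  by rewrite he0 => /lab_inj.
have key : forall (Mn : 'M[K]_k) g, FM k k g (pk Mn) ->
   (M |x ((1%:M : 'M[K]_k) *t Mn) |x pr_mx k =pk= delta k k |x ones_row k <->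
    forall x, fo (lab x * k + g (lab x))%N = lab e0).
  move=> Mn g hg.
  have hT := FM_tens (FM_one K k) hg.
  have hA := FM_stp_eq FM_M hT kk_gt0.
  have hB := FM_stp_eq hA (FM_pr K k) kk_gt0.
  have hD := FM_stp_eq (FM_delta K hk) (FM_ones K k) (ltn0Sn 0).
  rewrite (FM_eq hB hD) all1E he0.
  by split => H' x; move: (H' x); simp.
split => [Hinv|[neg [Mn [hL [hneg hmain]]]]].
  have ve : vform K lab e0 = delta k k by rewrite /vform -he0 prednK.
  have [neg hn] := fin_all_exists (Hinv e0 ve).
  pose Mn : 'M[K]_k := \matrix_(i, j) (i == lab (neg (xo j)) :> nat)%:R.
  have hM : FM k k (fun c => nat_of_ord (lab (neg (xo c)))) (pk Mn).
    rewrite /FM /pk /=; split => //; apply: isfm_mx => [j _|i j]; first exact: ltn_ord.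
    by rewrite mxE.
  exists neg, Mn; split; last split.
  - move=> j; exists (lab (neg (xo j))).+1; first by rewrite /= ltn_ord.
    by apply/matrixP => i0 j0; rewrite !mxE eqSS.
  - move=> x; apply/(FM_eq (FM_v (neg x)) (FM_stp_eq hM (FM_v x) k_gt0)) => c _.
    by rewrite xolab.
  - by apply/(key _ _ hM) => x; rewrite xolab foE hn.
have [g hg] := FM_logical hL.
have eg : forall x, g (lab x) = lab (neg x).
  move=> x; have := (FM_eq (FM_v (neg x)) (FM_stp_eq hg (FM_v x) k_gt0)).1 (hneg x) 0 erefl.
  by move=> ->.
move=> z /ve0 -> x; exists (neg x); apply: lab_inj.
by have := (key _ _ hg).1 hmain x; rewrite eg foE.
Qed.
End Op.


Section Two.
Variables (add mul : R -> R -> R) (Madd Mmul : 'M[K]_(k, k * k))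
  (HLadd : logical_mx Madd) (HLmul : logical_mx Mmul)
  (Hadd : forall x y : R, vform K lab (add x y) =pk= Madd |x vform K lab x |x vform K lab y)
  (Hmul : forall x y : R, vform K lab (mul x y) =pk= Mmul |x vform K lab x |x vform K lab y).

Ltac simp := cbv beta; do 12 rewrite ?mulnA ?divnMA ?modn_kk ?(divnMDl _ _ k_gt0) ?modnMDl ?labdiv ?labmod ?addn0 ?foE ?xolab.

Lemma e4 : (k * k * (k * k) = k * (k * k) * k)%N. Proof. by rewrite !mulnA. Qed.
Lemma k4_gt0 : (0 < k * k * (k * k))%N. Proof. by rewrite !muln_gt0 k_gt0. Qed.
Lemma k3_gt0 : (0 < k * (k * k))%N. Proof. by rewrite !muln_gt0 k_gt0. Qed.

Lemma right_iff :
  (forall x y z : R, mul (add x y) z = add (mul x z) (mul y z)) <->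
  (Mmul |x Madd =pk=
        Madd |x Mmul |x ((1%:M : 'M[K]_(k * k)) *t Mmul)
             |x ((1%:M : 'M[K]_k) *t swap_mx k k)
             |x ((1%:M : 'M[K]_(k * k)) *t pr_mx k)).
Proof.
have FA := FM_M HLadd Hadd; have FMu := FM_M HLmul Hmul.
have R1 := FM_stp_div FA FMu (t := k) erefl k_gt0 k_gt0.
have R2 := FM_stp_eq R1 (FM_tens (FM_one K (k * k)) FMu) kkk_gt0.
have R3 := FM_stp_div R2 (FM_tens (FM_one K k) (FM_swap K k k)) (t := k) e4 k3_gt0 k_gt0.
have R4 := FM_stp_eq (FM_dim erefl (esym e4) R3) (FM_tens (FM_one K (k * k)) (FM_pr K k))
   k4_gt0.
have L := FM_stp_div FMu FA (t := k) erefl k_gt0 k_gt0.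
rewrite (FM_eq L R4) all3E; split => Hc x y z.
  by simp; rewrite Hc.
by have := Hc x y z; simp; apply: lab_inj.
Qed.


Lemma e4' : (k * (k * k) * k = k * k * (k * k))%N. Proof. by rewrite !mulnA. Qed.

Lemma left_iff :
  (forall x y z : R, mul x (add y z) = add (mul x y) (mul x z)) <->
  (Mmul |x ((1%:M : 'M[K]_k) *t Madd) =pk=
        Madd |x Mmul |x ((1%:M : 'M[K]_(k * k)) *t Mmul)
             |x ((1%:M : 'M[K]_k) *t swap_mx k k)
             |x pr_mx k).
Proof.
have FA := FM_M HLadd Hadd; have FMu := FM_M HLmul Hmul.
have R1 := FM_stp_div FA FMu (t := k) erefl k_gt0 k_gt0.
have R2 := FM_stp_eq R1 (FM_tens (FM_one K (k * k)) FMu) kkk_gt0.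
have R3 := FM_stp_div R2 (FM_tens (FM_one K k) (FM_swap K k k)) (t := k) e4 k3_gt0 k_gt0.
have R4 := FM_dim erefl (mulnA _ _ _) (FM_stp_div R3 (FM_pr K k) (t := k * k) e4' kk_gt0 kk_gt0).
have L := FM_dim erefl (mulnA _ _ _) (FM_stp_eq FMu (FM_tens (FM_one K k) FA) kk_gt0).
rewrite (FM_eq L R4) all3E; split => Hc x y z.
  by simp; rewrite Hc.
by have := Hc x y z; simp; apply: lab_inj.
Qed.
End Two.
End Main.

Unset Implicit Arguments.
Theorem theorem3p1 (K : nzRingType) (R : finType) (k : nat) (k_gt0 : (0 < k)%N)
  (lab : R -> 'I_k) (lab_bij : bijective lab)
  (add mul : R -> R -> R) (Madd Mmul : 'M[K]_(k, k * k))
  (HLadd : logical_mx Madd) (HLmul : logical_mx Mmul)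
  (Hadd : forall x y : R,
      vform K lab (add x y) =pk= Madd |x vform K lab x |x vform K lab y)
  (Hmul : forall x y : R,
      vform K lab (mul x y) =pk= Mmul |x vform K lab x |x vform K lab y) :
  (* (i) commutativity of add *)
  ((forall x y : R, add x y = add y x) <->
     Madd =pk= Madd |x swap_mx k k) /\
  (* (ii) associativity of add *)
  ((forall x y z : R, add (add x y) z = add x (add y z)) <->
     Madd |x Madd =pk= Madd |x ((1%:M : 'M[K]_k) *t Madd)) /\
  (* (iii) delta_k^k is the identity for add *)
  ((exists e : R, vform K lab e = delta k k /\
                  forall x : R, add e x = x /\ add x e = x) <->
     (Madd |x delta k k =pk= (1%:M : 'M[K]_k) /\
      Madd |x swap_mx k k |x delta k k =pk= (1%:M : 'M[K]_k))) /\
  (* (iv) (R, add) has inverses w.r.t. the element represented by delta_k^k *)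
  ((forall z : R, vform K lab z = delta k k ->
      forall x : R, exists y : R, add x y = z) <->
     (exists (neg : R -> R) (Mneg : 'M[K]_k),
        logical_mx Mneg /\
        (forall x : R, vform K lab (neg x) =pk= Mneg |x vform K lab x) /\
        Madd |x ((1%:M : 'M[K]_k) *t Mneg) |x pr_mx k
          =pk= delta k k |x ones_row k)) /\
  (* (v) associativity of mul *)
  ((forall x y z : R, mul (mul x y) z = mul x (mul y z)) <->
     Mmul |x Mmul =pk= Mmul |x ((1%:M : 'M[K]_k) *t Mmul)) /\
  (* (vi) delta_k^1 is the identity for mul *)
  ((exists e : R, vform K lab e = delta k 1 /\
                  forall x : R, mul e x = x /\ mul x e = x) <->
     (Mmul |x delta k 1 =pk= (1%:M : 'M[K]_k) /\
      Mmul |x swap_mx k k |x delta k 1 =pk= (1%:M : 'M[K]_k))) /\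
  (* (vii) both distributive laws *)
  (((forall x y z : R, mul x (add y z) = add (mul x y) (mul x z)) /\
    (forall x y z : R, mul (add x y) z = add (mul x z) (mul y z))) <->
     (Mmul |x Madd =pk=
        Madd |x Mmul |x ((1%:M : 'M[K]_(k * k)) *t Mmul)
             |x ((1%:M : 'M[K]_k) *t swap_mx k k)
             |x ((1%:M : 'M[K]_(k * k)) *t pr_mx k) /\
      Mmul |x ((1%:M : 'M[K]_k) *t Madd) =pk=
        Madd |x Mmul |x ((1%:M : 'M[K]_(k * k)) *t Mmul)
             |x ((1%:M : 'M[K]_k) *t swap_mx k k)
             |x pr_mx k)).

Proof.
case: lab_bij => linv labK linvK.
split; first exact: (comm_iff k_gt0 labK linvK HLadd Hadd).
split; first exact: (assoc_iff k_gt0 labK linvK HLadd Hadd).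
split.
  by apply: (ident_iff k_gt0 labK linvK HLadd Hadd); rewrite k_gt0 leqnn.
split; first exact: (inv_iff k_gt0 labK linvK HLadd Hadd).
split; first exact: (assoc_iff k_gt0 labK linvK HLmul Hmul).
split.
  by apply: (ident_iff k_gt0 labK linvK HLmul Hmul); rewrite k_gt0.
rewrite (left_iff k_gt0 labK linvK HLadd HLmul Hadd Hmul).
rewrite (right_iff k_gt0 labK linvK HLadd HLmul Hadd Hmul).
tauto.
Qed.
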